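(* Let $\mathcal L$ be an optionality-ignoring choice logic. Then for all $\mathcal L$-formulas $A,B$: $A\equiv^{s}_{\mathcal L}B$ if and only if $A\equiv^{\deg}_{\mathcal L}B$.
   Context: Fix a countably infinite set $\mathcal U$ of propositional variables. Let $\mathbb N=\{1,2,3,\dots\}$ and $\overline{\mathbb N}=\mathbb N\cup\{\infty\}$, with $n<\infty$ for all $n\in\mathbb N$. An interpretation is a set $\mathcal I\subseteq\mathcal U$ (the variables set to true). A choice logic $\mathcal L$ is specified by a finite set $C_{\mathcal L}$ of binary connective symbols disjoint from $\{\neg,\land,\lor\}$ and, for each $\circ\in C_{\mathcal L}$, a function $\mathrm{opt}_\circ:\mathbb N^2\to\mathbb N$ with $\mathrm{opt}_\circ(k,\ell)\le (k+1)(\ell+1)$ for all $k,\ell$, and a function $\deg_\circ:\mathbb N^2\times\overline{\mathbb N}^2\to\overline{\mathbb N}$ such that for all $k,\ell\in\mathbb N$, $m,n\in\overline{\mathbb N}$, either $\deg_\circ(k,\ell,m,n)\le \mathrm{opt}_\circ(k,\ell)$ or $\deg_\circ(k,\ell,m,n)=\infty$. The $\mathcal L$-formulas are built from variables in $\mathcal U$ using unary $\neg$ and binary $\land,\lor$ and the connectives in $C_{\mathcal L}$. The optionality $\mathrm{opt}_{\mathcal L}$ of formulas is defined by: $\mathrm{opt}_{\mathcal L}(a)=1$ for $a\in\mathcal U$; $\mathrm{opt}_{\mathcal L}(\neg F)=1$; $\mathrm{opt}_{\mathcal L}(F\land G)=\mathrm{opt}_{\mathcal L}(F\lor G)=\max(\mathrm{opt}_{\mathcal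 L}(F),\mathrm{opt}_{\mathcal L}(G))$; $\mathrm{opt}_{\mathcal L}(F\circ G)=\mathrm{opt}_\circ(\mathrm{opt}_{\mathcal L}(F),\mathrm{opt}_{\mathcal L}(G))$ for $\circ\in C_{\mathcal L}$. The satisfaction degree $\deg_{\mathcal L}(\mathcal I,F)\in\overline{\mathbb N}$ is defined by: $\deg_{\mathcal L}(\mathcal I,a)=1$ if $a\in\mathcal I$ and $\infty$ otherwise; $\deg_{\mathcal L}(\mathcal I,\neg F)=1$ if $\deg_{\mathcal L}(\mathcal I,F)=\infty$ and $\infty$ otherwise; $\deg_{\mathcal L}(\mathcal I,F\land G)=\max(\deg_{\mathcal L}(\mathcal I,F),\deg_{\mathcal L}(\mathcal I,G))$; $\deg_{\mathcal L}(\mathcal I,F\lor G)=\min(\deg_{\mathcal L}(\mathcal I,F),\deg_{\mathcal L}(\mathcal I,G))$; $\deg_{\mathcal L}(\mathcal I,F\circ G)=\deg_\circ(\mathrm{opt}_{\mathcal L}(F),\mathrm{opt}_{\mathcal L}(G),\deg_{\mathcal L}(\mathcal I,F),\deg_{\mathcal L}(\mathcal I,G))$ for $\circ\in C_{\mathcal L}$. An interpretation $\mathcal I$ is a preferred model of $F$, written $\mathcal I\in\mathrm{Pref}_{\mathcal L}(F)$, if $\deg_{\mathcal L}(\mathcal I,F)\ne\infty$ and $\deg_{\mathcal L}(\mathcal I,F)\le\deg_{\mathcal L}(\mathcal J,F)$ for all interpretations $\mathcal J$. $F[A/B]$ denotes the formula obtained from $F$ by replacing an occurrence of the subformula $A$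 by $B$ (and equals $F$ if $A$ does not occur in $F$). Two $\mathcal L$-formulas $A,B$ are degree-equivalent, $A\equiv^{\deg}_{\mathcal L}B$, if $\deg_{\mathcal L}(\mathcal I,A)=\deg_{\mathcal L}(\mathcal I,B)$ for all interpretations $\mathcal I$; they are strongly equivalent, $A\equiv^{s}_{\mathcal L}B$, if $\mathrm{Pref}_{\mathcal L}(F)=\mathrm{Pref}_{\mathcal L}(F[A/B])$ for all $\mathcal L$-formulas $F$. $\mathcal L$ is optionality-ignoring if for every $\circ\in C_{\mathcal L}$, every interpretation $\mathcal I$ and all $\mathcal L$-formulas $F,F',G,G'$ with $\deg_{\mathcal L}(\mathcal I,F)=\deg_{\mathcal L}(\mathcal I,F')$ and $\deg_{\mathcal L}(\mathcal I,G)=\deg_{\mathcal L}(\mathcal I,G')$ we have $\deg_{\mathcal L}(\mathcal I,F\circ G)=\deg_{\mathcal L}(\mathcal I,F'\circ G')$. *)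

(* Defs.v *)
From mathcomp Require Import all_boot.
Set Implicit Arguments.
Unset Strict Implicit.
Unset Printing Implicit Defensive.

(* Extended naturals  \overline{N}:  Some n = n,  None = infinity.
   Elements of N = {1,2,...} are represented by positive nats. *)
Definition ext := option nat.

Definition ext_le (x y : ext) : Prop :=
  match x, y with
  | _, None => True
  | None, Some _ => False
  | Some m, Some n => m <= n
  end.

Definition ext_max (x y : ext) : ext :=
  match x, y with
  | None, _ => None
  | _, None => None
  | Some m, Some n => Some (maxn m n)
  end.

Definition ext_min (x y : ext) : ext :=
  match x, y with
  | None, y => y
  | x, None => x
  | Some m, Some n => Some (minn m n)
  end.

Definition ext_pos (x : ext) : Prop :=
  match x with None => True | Some n => 0 < n end.

Record choiceLogic := ChoiceLogic {
  conn : finType;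
  opt_c : conn -> nat -> nat -> nat;
  deg_c : conn -> nat -> nat -> ext -> ext -> ext;
  opt_c_pos : forall c k l, 0 < k -> 0 < l -> 0 < opt_c c k l;
  opt_c_bound : forall c k l, 0 < k -> 0 < l ->
      opt_c c k l <= (k + 1) * (l + 1);
  deg_c_range : forall c k l m n, 0 < k -> 0 < l -> ext_pos m -> ext_pos n ->
      deg_c c k l m n = None \/
      (exists d, deg_c c k l m n = Some d /\ 0 < d /\ d <= opt_c c k l)
}.

(* Propositional variables: U = nat (countably infinite). *)
Inductive formula (C : Type) : Type :=
  | FVar : nat -> formula C
  | FNeg : formula C -> formula C
  | FAnd : formula C -> formula C -> formula C
  | FOr  : formula C -> formula C -> formula C
  | FConn : C -> formula C -> formula C -> formula C.

Arguments FVar {C} _.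

Definition lformula (L : choiceLogic) := formula (conn L).

Definition interp := nat -> bool.

Fixpoint optL (L : choiceLogic) (F : lformula L) : nat :=
  match F with
  | FVar _ => 1
  | FNeg _ => 1
  | FAnd F G => maxn (optL F) (optL G)
  | FOr F G => maxn (optL F) (optL G)
  | FConn c F G => opt_c c (optL F) (optL G)
  end.

Fixpoint degL (L : choiceLogic) (I : interp) (F : lformula L) : ext :=
  match F with
  | FVar a => if I a then Some 1 else None
  | FNeg F => match degL I F with None => Some 1 | Some _ => None end
  | FAnd F G => ext_max (degL I F) (degL I G)
  | FOr F G => ext_min (degL I F) (degL I G)
  | FConn c F G => deg_c c (optL F) (optL G) (degL I F) (degL I G)
  end.

Definition Pref (L : choiceLogic) (F : lformula L) (I : interp) : Prop :=
  degL I F <> None /\ forall J : interp, ext_le (degL I F) (degL J F).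

Inductive replace1 (C : Type) (A B : formula C) : formula C -> formula C -> Prop :=
  | rep_here : replace1 A B A B
  | rep_neg F F' : replace1 A B F F' -> replace1 A B (FNeg F) (FNeg F')
  | rep_andl F F' G : replace1 A B F F' -> replace1 A B (FAnd F G) (FAnd F' G)
  | rep_andr F G G' : replace1 A B G G' -> replace1 A B (FAnd F G) (FAnd F G')
  | rep_orl F F' G : replace1 A B F F' -> replace1 A B (FOr F G) (FOr F' G)
  | rep_orr F G G' : replace1 A B G G' -> replace1 A B (FOr F G) (FOr F G')
  | rep_connl c F F' G : replace1 A B F F' -> replace1 A B (FConn c F G) (FConn c F' G)
  | rep_connr c F G G' : replace1 A B G G' -> replace1 A B (FConn c F G) (FConn c F G').

Inductive subformula (C : Type) (A : formula C) : formula C -> Prop :=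
  | sub_here : subformula A A
  | sub_neg F : subformula A F -> subformula A (FNeg F)
  | sub_andl F G : subformula A F -> subformula A (FAnd F G)
  | sub_andr F G : subformula A G -> subformula A (FAnd F G)
  | sub_orl F G : subformula A F -> subformula A (FOr F G)
  | sub_orr F G : subformula A G -> subformula A (FOr F G)
  | sub_connl c F G : subformula A F -> subformula A (FConn c F G)
  | sub_connr c F G : subformula A G -> subformula A (FConn c F G).

(* F' is a possible value of F[A/B] *)
Definition is_subst (C : Type) (F A B F' : formula C) : Prop :=
  replace1 A B F F' \/ (~ subformula A F /\ F' = F).

Definition deg_equiv (L : choiceLogic) (A B : lformula L) : Prop :=
  forall I : interp, degL I A = degL I B.

Definition strong_equiv (L : choiceLogic) (A B : lformula L) : Prop :=
  forall F F' : lformula L, is_subst F A B F' ->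
    forall I : interp, Pref F I <-> Pref F' I.

Definition optionality_ignoring (L : choiceLogic) : Prop :=
  forall (c : conn L) (I : interp) (F F' G G' : lformula L),
    degL I F = degL I F' -> degL I G = degL I G' ->
    degL I (FConn c F G) = degL I (FConn c F' G').

(* Main.v *)
Require Import Defs.
From mathcomp Require Import all_boot.
From Stdlib Require Import Setoid.

Section S.
Variable L : choiceLogic.

Fixpoint vars (F : lformula L) : seq nat :=
  match F with
  | FVar a => [:: a]
  | FNeg F => vars F
  | FAnd F G => vars F ++ vars G
  | FOr F G => vars F ++ vars G
  | FConn _ F G => vars F ++ vars G
  end.

Lemma optL_pos (F : lformula L) : 0 < optL F.
Proof.
elim: F => //= [F1 H1 F2 H2|F1 H1 F2 H2|c F1 H1 F2 H2].
- by rewrite leq_max H1.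
- by rewrite leq_max H1.
- by apply: opt_c_pos.
Qed.

Lemma deg_pos I (F : lformula L) : ext_pos (degL I F).
Proof.
elim: F => /= [a|F H|F1 H1 F2 H2|F1 H1 F2 H2|c F1 H1 F2 H2].
- by case: (I a).
- by case: (degL I F).
- move: H1 H2; case: (degL I F1) => [m|] //; case: (degL I F2) => [n|] //=.
  by move=> Hm Hn; rewrite leq_max Hm.
- move: H1 H2; case: (degL I F1) => [m|] //; case: (degL I F2) => [n|] //=.
  by move=> Hm Hn; rewrite leq_min Hm Hn.
- case: (deg_c_range c (optL_pos F1) (optL_pos F2) H1 H2) => [->|[d [-> [Hd _]]]] //.
Qed.

Lemma deg_agree I J (F : lformula L) :
  (forall v, v \in vars F -> I v = J v) -> degL I F = degL J F.
Proof.
elim: F => /= [a|F H|F1 H1 F2 H2|F1 H1 F2 H2|c F1 H1 F2 H2] Hv.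
- by rewrite Hv // mem_seq1.
- by rewrite H.
- rewrite H1 ?H2 // => v Hv'; apply: Hv; rewrite mem_cat Hv' ?orbT //.
- rewrite H1 ?H2 // => v Hv'; apply: Hv; rewrite mem_cat Hv' ?orbT //.
- rewrite H1 ?H2 // => v Hv'; apply: Hv; rewrite mem_cat Hv' ?orbT //.
Qed.

Definition lit (I : interp) (v : nat) : lformula L :=
  if I v then FVar v else FNeg (FVar v).

Fixpoint lits (I : interp) (l : seq nat) (base : lformula L) : lformula L :=
  match l with
  | [::] => base
  | v :: l => FAnd (lit I v) (lits I l base)
  end.

Lemma lits_deg I J l base :
  (degL J base = Some 1 \/ degL J base = None) ->
  degL J (lits I l base) = if all (fun v => J v == I v) l then degL J base else None.
Proof.
move=> Hb; elim: l => [|v l IH] //=.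
rewrite IH /lit.
case: (I v) => /=; case: (J v) => /=; case: (all (fun v => J v == I v) l) => //=; by case: Hb => ->.
Qed.

Lemma ext_max1 x : ext_pos x -> ext_max x (Some 1) = x.
Proof. by case: x => //= n Hn; rewrite (maxn_idPl Hn). Qed.

Lemma exmaxN x : ext_max x None = None. Proof. by case: x. Qed.
Lemma exminN x : ext_min None x = x. Proof. by case: x. Qed.
Lemma exminN' x : ext_min x None = x. Proof. by case: x. Qed.

Lemma ext_le_refl x : ext_le x x.
Proof. by case: x => //= n; rewrite leqnn. Qed.

Lemma ext_le_anti x y : ext_le x y -> ext_le y x -> x = y.
Proof.
case: x; case: y => //= m n H1 H2; congr Some; apply/eqP; rewrite eqn_leq H1 H2 //.
Qed.

Lemma repl_deg (HL : optionality_ignoring L) (A B F F' : lformula L) :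
  deg_equiv A B -> replace1 A B F F' -> forall I, degL I F = degL I F'.
Proof.
move=> HAB; elim => //= {F F'}.
- by move=> F F' _ H I; rewrite H.
- by move=> F F' G _ H I; rewrite H.
- by move=> F G G' _ H I; rewrite H.
- by move=> F F' G _ H I; rewrite H.
- by move=> F G G' _ H I; rewrite H.
- by move=> c F F' G _ H I; apply: HL.
- by move=> c F G G' _ H I; apply: HL.
Qed.

End S.
Arguments vars {L}.
Arguments lit {L}.
Arguments lits {L}.
Arguments repl_deg {L}.

Theorem mainTheorem7 (L : choiceLogic) (HL : optionality_ignoring L)
  (A B : lformula L) :
  strong_equiv A B <-> deg_equiv A B.
Proof.
split; last first.
  move=> HAB F F' [Hr|[_ ->]] I; last by [].
  have E := repl_deg HL A B F F' HAB Hr.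
  rewrite /Pref E; split=> [[H1 H2]|[H1 H2]]; split=> // J; move: (H2 J);
  by rewrite E.
move=> Hs I.
set V := vars A ++ vars B.
set p := (foldr maxn 0 V).+1.
have pV : p \notin V.
  have : forall v, v \in V -> v < p.
    rewrite /p; elim: (V) => [|w s IH] v //; rewrite inE => /orP [/eqP ->|Hv].
      by rewrite ltnS leq_maxl.
    by apply: (leq_trans (IH v Hv)); rewrite ltnS leq_maxr.
  by move=> H; apply/negP => /H; rewrite ltnn.
set I1 : interp := fun v => if v == p then false else I v.
set I2 : interp := fun v => if v == p then true else I v.
pose chi1 : lformula L := lits I V (FNeg (FVar p)).
pose chi2 : lformula L := lits I V (FVar p).
pose G (X Y : lformula L) := FOr (FAnd X chi1) (FAnd Y chi2).
have agree : forall (X : lformula L) J, all (fun v => J v == I v) V ->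
    (forall v, v \in vars X -> v \in V) -> degL J X = degL I X.
  move=> X J /allP HJ HX; apply: deg_agree => v /HX /HJ /eqP //.
have degG : forall X Y J, (forall v, v \in vars X -> v \in V) ->
   (forall v, v \in vars Y -> v \in V) ->
   degL J (G X Y) = if all (fun v => J v == I v) V then
     (if J p then degL I Y else degL I X) else None.
  move=> X Y J HX HY; rewrite /= /chi1 /chi2 !lits_deg /=; last first.
  - by case: (J p); [right|left].
  - by case: (J p); [left|right].
  case Ha: (all (fun v => J v == I v) V); last by case: (degL J X); case: (degL J Y).
  rewrite !agree //; case: (J p) => /=.
  + by rewrite exmaxN exminN ext_max1 //; apply: deg_pos.
  + by rewrite exmaxN exminN' ext_max1 //; apply: deg_pos.
have VA : forall v, v \in vars A -> v \in V by move=> v Hv; rewrite mem_cat Hv.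
have VB : forall v, v \in vars B -> v \in V by move=> v Hv; rewrite mem_cat Hv orbT.
have allI1 : all (fun v => I1 v == I v) V.
  apply/allP => v Hv /=; rewrite /I1; have Hvp : v != p by apply: contraNneq pV => <-.
  by rewrite (negbTE Hvp).
have allI2 : all (fun v => I2 v == I v) V.
  apply/allP => v Hv /=; rewrite /I2; have Hvp : v != p by apply: contraNneq pV => <-.
  by rewrite (negbTE Hvp).
have I1p : I1 p = false by rewrite /I1 eqxx.
have I2p : I2 p = true by rewrite /I2 eqxx.
have PrefG1 : forall X Y, (forall v, v \in vars X -> v \in V) ->
   (forall v, v \in vars Y -> v \in V) ->
   Pref (G X Y) I1 <-> (degL I X <> None /\ ext_le (degL I X) (degL I Y)).
  move=> X Y HX HY; rewrite /Pref degG // allI1 I1p; split.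
    by move=> [H1 H2]; split=> //; move: (H2 I2); rewrite degG // allI2 I2p.
  move=> [H1 H2]; split=> // J; rewrite degG //.
  case: (all _ _); last by case: (degL I X).
  by case: (J p) => //; apply: ext_le_refl.
have PrefG2 : forall X Y, (forall v, v \in vars X -> v \in V) ->
   (forall v, v \in vars Y -> v \in V) ->
   Pref (G X Y) I2 <-> (degL I Y <> None /\ ext_le (degL I Y) (degL I X)).
  move=> X Y HX HY; rewrite /Pref degG // allI2 I2p; split.
    by move=> [H1 H2]; split=> //; move: (H2 I1); rewrite degG // allI1 I1p.
  move=> [H1 H2]; split=> // J; rewrite degG //.
  case: (all _ _); last by case: (degL I Y).
  by case: (J p) => //; apply: ext_le_refl.
have Hr : is_subst (G A B) A B (G B B).
  by left; apply: rep_orl; apply: rep_andl; apply: rep_here.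
have E1 : (degL I A <> None /\ ext_le (degL I A) (degL I B)) <->
          (degL I B <> None /\ ext_le (degL I B) (degL I B)).
  rewrite -(PrefG1 A B) // -(PrefG1 B B) //; exact: Hs _ _ Hr I1.
have E2 : (degL I B <> None /\ ext_le (degL I B) (degL I A)) <->
          (degL I B <> None /\ ext_le (degL I B) (degL I B)).
  rewrite -(PrefG2 A B) // -(PrefG2 B B) //; exact: Hs _ _ Hr I2.
case HB: (degL I B) => [n|] in E1 E2 *.
  have [Ha Hab] : degL I A <> None /\ ext_le (degL I A) (Some n).
    by apply E1; split=> //; apply: ext_le_refl.
  have [_ Hba] : Some n <> None /\ ext_le (Some n) (degL I A).
    by apply E2; split=> //; apply: ext_le_refl.
  by apply: ext_le_anti.
case HA: (degL I A) => [m|] // in E1 *.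
have H : Some m <> None /\ ext_le (Some m) None by split.
by case: (proj1 E1 H).
Qed.
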